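(* Consider the single-server control problem of minimizing $\limsup_{T\to\infty}\frac1T\sum_{t=0}^{T-1}\mathbb{E}[c(X_t,\nu_t)]$ with $c(x,\nu)=Cx+(1-\nu)\lambda$. There exists an optimal stable stationary policy $v^*:\mathcal N\to\{0,1\}$, and $W(x)=e^{ax}$ (with $a>0$ satisfying $p(e^a-1)<\frac{q}{2}(1-e^{-a})$) serves as a Lyapunov function for the corresponding optimally controlled Markov chain $\{X^*_t\}$, i.e. $\mathbb{E}[W(X^*_{t+1})-W(X^*_t)\mid X^*_t]\le -bW(X^*_t)$ for $X^*_t\neq 0$, for some $b>0$.
   Context: Single-server (decoupled) problem: Bernoulli($p$) arrivals $\xi_t$, $p\in(0,1)$; queue length $X_t\in\mathcal N=\{0,1,2,\dots\}$ with $X_{t+1}=X_t-D_{t+1}+\nu_t\xi_{t+1}$, $\nu_t\in\{0,1\}$ an admissible control (1 = active, arrivals admitted; 0 = passive), where given $X_t=x\ge1$, $D_{t+1}\sim\mathrm{Binomial}(x,q/x)$ and there are no departures when $x=0$. Parameters: holding cost $C>0$, capacity $q$ with $1>q>2p$, Lagrange multiplier (subsidy/tax for passivity) $\lambda\in\mathbb R$. Cost per stage $c(x,\nu)=Cx+(1-\nu)\lambda$. *)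

(* Defs.v *)
From Stdlib Require Import Reals List.
Open Scope R_scope.

Fixpoint sumR (n : nat) (f : nat -> R) : R :=
  match n with O => 0 | S m => sumR m f + f m end.

(* Binomial(x, q/x) probability mass at d (for x = 0 this is the point mass at 0). *)
Definition binom_pmf (q : R) (x d : nat) : R :=
  Binomial.C x d * (q / INR x) ^ d * (1 - q / INR x) ^ (x - d)%nat.

(* One-step conditional expectation E[f(X_{t+1}) | X_t = x, nu_t = nu]
   with X_{t+1} = X_t - D_{t+1} + nu * xi_{t+1},
   D ~ Binomial(x, q/x) (D = 0 when x = 0), xi ~ Bernoulli(p) independent. *)
Definition Ex (p q : R) (f : nat -> R) (x : nat) (nu : bool) : R :=
  sumR (S x)%nat (fun d =>
    binom_pmf q x d *
    (if nu then p * f (S (x - d)%nat) + (1 - p) * f (x - d)%nat else f (x - d)%nat)).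

Definition cost (C lam : R) (x : nat) (nu : bool) : R :=
  C * INR x + (if nu then 0 else lam).

(* Admissible (history-dependent, possibly randomized) policy:
   given the past history [(X_0,nu_0);...;(X_{t-1},nu_{t-1})] and the current
   state X_t, returns the probability of choosing nu_t = 1 (active). *)
Definition policy := list (nat * bool) -> nat -> R.
Definition admissible (pi : policy) : Prop :=
  forall h x, 0 <= pi h x <= 1.

Definition stat (v : nat -> bool) : policy :=
  fun _ x => if v x then 1 else 0.

(* E[g(X_t, nu_t)] where the process is started (at "time 0" of the recursion)
   in current state x with past history h and follows pi. *)
Fixpoint Eval (p q : R) (pi : policy) (g : nat -> bool -> R) (t : nat)
  (h : list (nat * bool)) (x : nat) : R :=
  match t with
  | O => pi h x * g x true + (1 - pi h x) * g x false
  | S t' =>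
      pi h x * Ex p q (Eval p q pi g t' (h ++ (x, true) :: nil)) x true
      + (1 - pi h x) * Ex p q (Eval p q pi g t' (h ++ (x, false) :: nil)) x false
  end.

Definition avg (p q : R) (pi : policy) (g : nat -> bool -> R) (x0 : nat) (T : nat) : R :=
  / INR T * sumR T (fun t => Eval p q pi g t nil x0).

(* limsup_{T->oo} u T < c  (in the extended reals) *)
Definition limsup_lt (u : nat -> R) (c : R) : Prop :=
  exists c', c' < c /\ exists N, forall T, (N <= T)%nat -> u T <= c'.

(* limsup u <= limsup w  (in the extended reals [-oo,+oo]) *)
Definition limsup_le (u w : nat -> R) : Prop :=
  forall c, limsup_lt w c -> limsup_lt u c.

Definition J (p q C lam : R) (pi : policy) (x0 : nat) : nat -> R :=
  avg p q pi (cost C lam) x0.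

Definition stable (p q : R) (v : nat -> bool) : Prop :=
  forall x0, exists M, limsup_lt (avg p q (stat v) (fun x _ => INR x) x0) M.

Definition W (a : R) (x : nat) : R := exp (a * INR x).

(* Main.v *)
Require Import Defs.
From Stdlib Require Import Reals Lra Lia Factorial.
From Coquelicot Require Import Coquelicot.
Open Scope R_scope.

Lemma sumR_ext n f g : (forall i, (i < n)%nat -> f i = g i) -> sumR n f = sumR n g.
Proof. induction n; simpl; intros H; auto. rewrite IHn by (intros; apply H; lia). rewrite H by lia; auto. Qed.

Lemma sumR_le n f g : (forall i, (i < n)%nat -> f i <= g i) -> sumR n f <= sumR n g.
Proof. induction n; simpl; intros H; [lra|]. assert (H1 := H n (Nat.lt_succ_diag_r n)).
  assert (sumR n f <= sumR n g) by (apply IHn; intros; apply H; lia). lra. Qed.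

Lemma sumR_lin n a f g : sumR n (fun i => a * f i + g i) = a * sumR n f + sumR n g.
Proof. induction n; simpl; [ring|]. rewrite IHn; ring. Qed.

Lemma sumR_plus n f g : sumR n (fun d => f d + g d) = sumR n f + sumR n g.
Proof. induction n; simpl; [ring|]. rewrite IHn; ring. Qed.

Lemma sumR_shift n f : sumR (S n) f = f O + sumR n (fun i => f (S i)).
Proof. induction n; simpl in *; [ring|]. rewrite IHn. ring. Qed.

(* Bernstein-type recursion *)
Fixpoint Bd (x : nat) (r : R) (g : nat -> R) : R :=
  match x with O => g O | S x' => Bd x' r (fun k => r * g (S k) + (1 - r) * g k) end.

Lemma Bd_ext x r f g : (forall k, (k <= x)%nat -> f k = g k) -> Bd x r f = Bd x r g.
Proof. revert f g; induction x; simpl; intros f g H. apply H; lia.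
  apply IHx. intros k Hk. rewrite !H by lia. auto. Qed.

Lemma Bd_lin x r a f g : Bd x r (fun k => a * f k + g k) = a * Bd x r f + Bd x r g.
Proof. revert f g; induction x; simpl; intros f g; [auto|].
  rewrite <- IHx. apply Bd_ext. intros; ring. Qed.

Lemma Bd_const x r c : Bd x r (fun _ => c) = c.
Proof. revert c; induction x; simpl; intros; auto.
  rewrite (Bd_ext _ _ _ (fun _ => c)); auto. intros; ring. Qed.

Lemma Bd_mono x r f g : 0 <= r <= 1 -> (forall k, (k <= x)%nat -> f k <= g k) -> Bd x r f <= Bd x r g.
Proof. revert f g; induction x; simpl; intros f g Hr H. apply H; lia.
  apply IHx; auto. intros k Hk. assert (f (S k) <= g (S k)) by (apply H; lia).
  assert (f k <= g k) by (apply H; lia). nra. Qed.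

Lemma Bd_geom x r z c : Bd x r (fun k => c * z ^ k) = c * (r * z + 1 - r) ^ x.
Proof. revert c; induction x; simpl; intros c; [ring|].
  rewrite (Bd_ext _ _ _ (fun k => (c * (r * z + 1 - r)) * z ^ k)). rewrite IHx. ring.
  intros; simpl; ring. Qed.

Definition incr (f : nat -> R) := forall k, f k <= f (S k).

Lemma incr_le f i j : incr f -> (i <= j)%nat -> f i <= f j.
Proof. intros Hf H; induction H; [lra|]. specialize (Hf m). lra. Qed.

Lemma Bd_incr_r x r r' g : 0 <= r <= r' -> r' <= 1 -> incr g -> Bd x r g <= Bd x r' g.
Proof. revert g; induction x; simpl; intros g Hr Hr' Hg; [lra|].
  apply Rle_trans with (Bd x r (fun k => r' * g (S k) + (1 - r') * g k)).
  apply Bd_mono; [lra|]. intros k _. specialize (Hg k). nra.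
  apply IHx; auto. intros k. assert (H2 := Hg (S k)). 
  assert (g k <= g (S k)) by apply Hg. nra. Qed.

Lemma Bd_incr_x x r g : 0 <= r <= 1 -> incr g -> Bd x r g <= Bd (S x) r g.
Proof. intros Hr Hg; simpl. apply Bd_mono; auto. intros k _. specialize (Hg k). nra. Qed.

Lemma Bd_incr_fun r g : 0 <= r <= 1 -> incr g -> incr (fun k => r * g (S k) + (1 - r) * g k).
Proof. intros Hr Hg k. assert (H1 := Hg k). assert (H2 := Hg (S k)). nra. Qed.

Lemma Bd_ind x r c : Bd x r (fun k => if Nat.eqb k x then c else 0) = c * r ^ x.
Proof. revert c; induction x; intros c; simpl; [ring|].
  rewrite (Bd_ext _ _ _ (fun k => (r * c) * (if Nat.eqb k x then 1 else 0) + 0)).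
  rewrite Bd_lin, IHx, Bd_const. ring.
  intros k Hk. 
  replace (Nat.eqb k (S x)) with false by (symmetry; apply Nat.eqb_neq; lia).
  destruct (Nat.eqb k x); ring. Qed.

Lemma Bd_top x r g : (1 <= x)%nat -> 0 <= r <= 1 -> incr g ->
  Bd x r g <= r ^ x * g x + (1 - r ^ x) * g (x - 1)%nat.
Proof. intros Hx Hr Hg.
  apply Rle_trans with (Bd x r (fun k => (g x - g (x-1)%nat) * (if Nat.eqb k x then 1 else 0) + g (x - 1)%nat)).
  apply Bd_mono; auto. intros k Hk. destruct (Nat.eqb_spec k x). subst; lra.
  apply Rle_trans with (g (x-1)%nat). apply incr_le; auto; lia. lra.
  rewrite Bd_lin, Bd_const, Bd_ind. lra. Qed.

Lemma Cn0 n : Binomial.C n 0 = 1.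
Proof. unfold Binomial.C. replace (n - 0)%nat with n by lia. simpl.
  assert (INR (fact n) <> 0) by (apply not_0_INR; apply fact_neq_0). field; auto. Qed.
Lemma Cnn n : Binomial.C n n = 1.
Proof. unfold Binomial.C. replace (n - n)%nat with O by lia. simpl.
  assert (INR (fact n) <> 0) by (apply not_0_INR; apply fact_neq_0). field; auto. Qed.

Lemma binom_step x d s : (d < x)%nat ->
  Binomial.C (S x) (S d) * s ^ S d * (1 - s) ^ (S x - S d) =
  s * (Binomial.C x d * s ^ d * (1 - s) ^ (x - d)) +
  (1 - s) * (Binomial.C x (S d) * s ^ S d * (1 - s) ^ (x - S d)).
Proof. intros H. rewrite <- pascal by auto.
  replace (S x - S d)%nat with (x - d)%nat by lia.
  replace (x - d)%nat with (S (x - S d))%nat by lia. simpl. ring. Qed.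

Lemma bridge x s F : sumR (S x) (fun d => Binomial.C x d * s ^ d * (1 - s) ^ (x - d) * F (x - d)%nat)
  = Bd x (1 - s) F.
Proof. revert F; induction x; intros F.
  simpl. rewrite Cn0. ring.
  simpl Bd. rewrite <- IHx. rewrite sumR_shift.
  set (w := fun x d => Binomial.C x d * s ^ d * (1 - s) ^ (x - d)).
  transitivity (w (S x) O * F (S x) + sumR (S x) (fun d => w (S x) (S d) * F (x - d)%nat)).
  unfold w; simpl; f_equal. 
  rewrite (sumR_ext (S x) (fun d => Binomial.C x d * s ^ d * (1 - s) ^ (x - d) * ((1 - s) * F (S (x - d)) + (1 - (1 - s)) * F (x - d)%nat)) (fun d => w x d * ((1 - s) * F (S (x - d)) + s * F (x - d)%nat))).
  2:{ intros; unfold w; ring. }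
  transitivity (sumR (S x) (fun d => (1-s) * (w x d * F (S (x - d)))) +
                sumR (S x) (fun d => s * (w x d * F (x - d)%nat))).
  2:{ rewrite <- sumR_plus. apply sumR_ext; intros; ring. }
  rewrite (sumR_shift x (fun d => (1 - s) * (w x d * F (S (x - d))))).
  change (sumR (S x) (fun d => w (S x) (S d) * F (x - d)%nat)) with
    (sumR x (fun d => w (S x) (S d) * F (x - d)%nat) + w (S x) (S x) * F (x - x)%nat).
  replace (w (S x) (S x)) with (s * w x x).
  2:{ unfold w. rewrite !Cnn. replace (S x - S x)%nat with O by lia.
      replace (x - x)%nat with O by lia. simpl. ring. }
  rewrite (sumR_ext x (fun d => w (S x) (S d) * F (x - d)%nat)
     (fun d => s * (w x d * F (x - d)%nat) + (1-s) * (w x (S d) * F (S (x - S d))))).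
  2:{ intros d Hd. unfold w. rewrite binom_step by auto.
      replace (S (x - S d)) with (x - d)%nat by lia. ring. }
  rewrite sumR_plus.
  change (sumR (S x) (fun d => s * (w x d * F (x-d)%nat))) with
    (sumR x (fun d => s * (w x d * F (x-d)%nat)) + s * (w x x * F (x - x)%nat)).
  replace (w (S x) 0%nat) with ((1-s) * w x 0%nat).
  2:{ unfold w. rewrite !Cn0. replace (S x - 0)%nat with (S x) by lia.
      replace (x - 0)%nat with x by lia. simpl. ring. }
  replace (S (x - 0)) with (S x) by lia. ring.
Qed.

Definition rr (q : R) (x : nat) : R := 1 - q / INR x.
Definition Gf (p : R) (f : nat -> R) (nu : bool) : nat -> R :=
  fun k => if nu then p * f (S k) + (1 - p) * f k else f k.

Lemma Ex_Bd p q f x nu : Ex p q f x nu = Bd x (rr q x) (Gf p f nu).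
Proof. unfold Ex, rr. rewrite <- bridge. apply sumR_ext. intros d _.
  unfold binom_pmf, Gf. destruct nu; ring. Qed.

Section ExProps.
Variables (p q : R).
Hypothesis (hp0 : 0 < p) (hp1 : p < 1) (hq0 : 0 < q) (hq1 : q < 1).

Lemma rr_range x : 0 <= rr q x <= 1.
Proof. unfold rr. destruct x. simpl. unfold Rdiv. rewrite Rinv_0. lra.
  assert (1 <= INR (S x)) by (apply (le_INR 1); lia).
  assert (0 < q / INR (S x)) by (apply Rdiv_lt_0_compat; lra).
  assert (q / INR (S x) <= q) by (unfold Rdiv; rewrite <- (Rmult_1_r q) at 2;
     apply Rmult_le_compat_l; [lra|]; rewrite <- Rinv_1; apply Rinv_le_contravar; lra).
  lra. Qed.

Lemma rr_lt1 x : (1 <= x)%nat -> 0 < rr q x < 1.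
Proof. intros Hx. unfold rr. 
  assert (1 <= INR x) by (apply (le_INR 1); lia).
  assert (0 < q / INR x) by (apply Rdiv_lt_0_compat; lra).
  assert (q / INR x <= q) by (unfold Rdiv; rewrite <- (Rmult_1_r q) at 2;
     apply Rmult_le_compat_l; [lra|]; rewrite <- Rinv_1; apply Rinv_le_contravar; lra).
  lra. Qed.

Lemma rr_mono x : (1 <= x)%nat -> rr q x <= rr q (S x).
Proof. intros Hx. unfold rr. destruct x. lia.
  assert (1 <= INR (S x)) by (apply (le_INR 1); lia).
  assert (INR (S x) <= INR (S (S x))) by (apply le_INR; lia).
  assert (q / INR (S (S x)) <= q / INR (S x)); [|lra].
  unfold Rdiv; apply Rmult_le_compat_l; [lra|]. apply Rinv_le_contravar; lra. Qed.

Lemma Gf_incr f nu : incr f -> incr (Gf p f nu).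
Proof. intros Hf k; unfold Gf; destruct nu; [|apply Hf].
  assert (H1 := Hf k); assert (H2 := Hf (S k)); nra. Qed.

Lemma Ex_le f g x nu : (forall y, (y <= S x)%nat -> f y <= g y) -> Ex p q f x nu <= Ex p q g x nu.
Proof. intros H. rewrite !Ex_Bd. apply Bd_mono. apply rr_range.
  intros k Hk. unfold Gf. destruct nu.
  assert (f (S k) <= g (S k)) by (apply H; lia). assert (f k <= g k) by (apply H; lia). nra.
  apply H; lia. Qed.

Lemma Ex_ext f g x nu : (forall y, f y = g y) -> Ex p q f x nu = Ex p q g x nu.
Proof. intros H. rewrite !Ex_Bd. apply Bd_ext. intros; unfold Gf; rewrite !H; auto. Qed.

Lemma Ex_lin a f g x nu : Ex p q (fun y => a * f y + g y) x nu = a * Ex p q f x nu + Ex p q g x nu.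
Proof. rewrite !Ex_Bd. rewrite <- Bd_lin. apply Bd_ext. intros; unfold Gf; destruct nu; ring. Qed.

Lemma Ex_const c x nu : Ex p q (fun _ => c) x nu = c.
Proof. rewrite Ex_Bd. unfold Gf. rewrite (Bd_ext _ _ _ (fun _ => c)). apply Bd_const.
  intros; destruct nu; ring. Qed.

Lemma Ex_incr_x f x nu : incr f -> Ex p q f x nu <= Ex p q f (S x) nu.
Proof. intros Hf. rewrite !Ex_Bd. destruct x.
  simpl. assert (H1 := rr_range 1). assert (H2 := Gf_incr f nu Hf O). nra.
  apply Rle_trans with (Bd (S x) (rr q (S (S x))) (Gf p f nu)).
  apply Bd_incr_r. split; [apply rr_range|apply rr_mono; lia]. apply rr_range. apply Gf_incr; auto.
  apply Bd_incr_x. apply rr_range. apply Gf_incr; auto. Qed.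

Lemma Ex_nu f x : incr f -> Ex p q f x false <= Ex p q f x true.
Proof. intros Hf. rewrite !Ex_Bd. apply Bd_mono. apply rr_range. intros k _.
  unfold Gf. assert (H := Hf k). nra. Qed.

Lemma Ex_top f x : incr f -> (1 <= x)%nat ->
  Ex p q f x false <= rr q x ^ x * f x + (1 - rr q x ^ x) * f (x - 1)%nat.
Proof. intros Hf Hx. rewrite Ex_Bd. apply Bd_top; auto. apply rr_range. Qed.

Lemma Ex0 f : Ex p q f 0 false = f O.
Proof. rewrite Ex_Bd. reflexivity. Qed.

Lemma Ex_incr f nu : incr f -> incr (fun x => Ex p q f x nu).
Proof. intros Hf x. apply Ex_incr_x; auto. Qed.

Lemma exp_INR a k : exp (a * INR k) = exp a ^ k.
Proof. induction k. simpl. rewrite Rmult_0_r, exp_0; auto.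
  rewrite S_INR, Rmult_plus_distr_l, Rmult_1_r, exp_plus, IHk. simpl. ring. Qed.

Lemma Ex_W a x nu : Ex p q (W a) x nu =
  (if nu then p * exp a + 1 - p else 1) * exp (a * INR x) * (1 - q / INR x * (1 - exp (- a))) ^ x.
Proof. rewrite Ex_Bd. unfold Gf, W.
  rewrite (Bd_ext _ _ _ (fun k => (if nu then p * exp a + 1 - p else 1) * exp a ^ k)).
  rewrite Bd_geom, exp_INR. rewrite (Rmult_assoc _ (exp a ^ x)). f_equal.
  rewrite <- Rpow_mult_distr. f_equal. unfold rr. set (t := q / INR x). rewrite exp_Ropp. field.
  assert (0 < exp a) by apply exp_pos. lra.
  intros k _. destruct nu; rewrite !exp_INR; simpl; ring. Qed.


Lemma lyap (a : R) :
  0 < a -> p * (exp a - 1) < q / 2 * (1 - exp (- a)) ->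
  exists b : R, 0 < b /\ forall x nu, x <> 0%nat -> Ex p q (W a) x nu - W a x <= - b * W a x.
Proof. intros Ha Hc.
  set (y := q * (1 - exp (- a))).
  assert (Hea : 1 < exp a). { rewrite <- exp_0. apply exp_increasing; lra. }
  assert (Hema : 0 < exp (- a) < 1). { split. apply exp_pos. rewrite <- exp_0. apply exp_increasing; lra. }
  assert (Hy : 0 < y < 1). { unfold y; split. apply Rmult_lt_0_compat; lra. assert (q * (1 - exp (- a)) <= q * 1) by (apply Rmult_le_compat_l; lra). lra. }
  set (K := 1 + p * (exp a - 1)).
  assert (q / 2 * (1 - exp (- a)) = y / 2) by (unfold y; field).
  assert (HK : K < 1 + y) by (unfold K; lra).
  assert (Hey : 1 + y < exp y) by (apply exp_ineq1; lra).
  assert (Hexy : 0 < exp (- y)) by apply exp_pos.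
  assert (Heyy : exp y * exp (- y) = 1) by (rewrite <- exp_plus; replace (y + - y) with 0 by ring; apply exp_0).
  exists (1 - K * exp (- y)). split. nra.
  intros x nu Hx. rewrite Ex_W.
  assert (HW : 0 < W a x) by apply exp_pos. unfold W in *.
  assert (Hx1 : 1 <= INR x) by (apply (le_INR 1); lia).
  assert (Hpow : (1 - q / INR x * (1 - exp (- a))) ^ x <= exp (- y)).
  { replace (q / INR x * (1 - exp (- a))) with (y / INR x) by (unfold y; field; lra).
    assert (0 < y / INR x <= y). { split. apply Rdiv_lt_0_compat; lra.
       unfold Rdiv. rewrite <- (Rmult_1_r y) at 2. apply Rmult_le_compat_l; [lra|].
       rewrite <- Rinv_1; apply Rinv_le_contravar; lra. }
    apply Rle_trans with (exp (- (y / INR x)) ^ x).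
    apply pow_incr. split. lra. assert (1 + - (y / INR x) < exp (- (y / INR x))) by (apply exp_ineq1; lra). lra.
    rewrite <- exp_INR. right. f_equal. field. lra. }
  assert (Hk : 0 <= (if nu then p * exp a + 1 - p else 1) <= K) by (destruct nu; unfold K; nra).
  assert (0 <= (1 - q / INR x * (1 - exp (- a))) ^ x).
  { apply pow_le. assert (q / INR x <= q). { unfold Rdiv. rewrite <- (Rmult_1_r q) at 2.
       apply Rmult_le_compat_l; [lra|]. rewrite <- Rinv_1; apply Rinv_le_contravar; lra. }
    assert (0 <= q / INR x) by (apply Rmult_le_pos; [lra| left; apply Rinv_0_lt_compat; lra]). nra. }
  set (z := (1 - q / INR x * (1 - exp (- a))) ^ x) in *.
  set (k := if nu then p * exp a + 1 - p else 1) in *.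
  set (w := exp (a * INR x)) in *.
  assert (k * z <= K * exp (- y)) by nra. nra.
Qed.


Lemma Eval_le pi g1 g2 t h x : admissible pi -> (forall y nu, g1 y nu <= g2 y nu) ->
  Eval p q pi g1 t h x <= Eval p q pi g2 t h x.
Proof. intros Hpi Hg. revert h x; induction t; intros h x; simpl; destruct (Hpi h x).
  assert (H1 := Hg x true); assert (H2 := Hg x false); nra.
  assert (Ex p q (Eval p q pi g1 t (h ++ (x, true) :: nil)) x true <=
          Ex p q (Eval p q pi g2 t (h ++ (x, true) :: nil)) x true) by (apply Ex_le; intros; auto).
  assert (Ex p q (Eval p q pi g1 t (h ++ (x, false) :: nil)) x false <=
          Ex p q (Eval p q pi g2 t (h ++ (x, false) :: nil)) x false) by (apply Ex_le; intros; auto).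
  nra. Qed.

Lemma Eval_lin pi a g1 g2 t h x :
  Eval p q pi (fun y nu => a * g1 y nu + g2 y nu) t h x = a * Eval p q pi g1 t h x + Eval p q pi g2 t h x.
Proof. revert h x; induction t; intros h x; simpl. ring.
  rewrite !(Ex_ext _ _ _ _ (fun y => IHt _ y)). rewrite !Ex_lin. ring. Qed.

Lemma Eval_const pi c t h x : Eval p q pi (fun _ _ => c) t h x = c.
Proof. revert h x; induction t; intros h x; simpl. ring.
  rewrite !(Ex_ext _ _ _ _ (fun y => IHt _ y)). rewrite !Ex_const. ring. Qed.

Lemma Eval_shift pi f t h x :
  Eval p q pi (fun y nu => Ex p q f y nu) t h x = Eval p q pi (fun y _ => f y) (S t) h x.
Proof. revert h x; induction t; intros h x.
  simpl. f_equal; f_equal; symmetry; apply Ex_ext; intros; ring.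
  change (Eval p q pi (fun y nu => Ex p q f y nu) (S t) h x) with
   (pi h x * Ex p q (Eval p q pi (fun y nu => Ex p q f y nu) t (h ++ (x, true) :: nil)) x true
    + (1 - pi h x) * Ex p q (Eval p q pi (fun y nu => Ex p q f y nu) t (h ++ (x, false) :: nil)) x false).
  rewrite !(Ex_ext _ _ _ _ (fun y => IHt _ y)). reflexivity. Qed.

Lemma stat_adm v : admissible (stat v).
Proof. intros h x; unfold stat; destruct (v x); lra. Qed.

Lemma Eval_stat v g t h x :
  Eval p q (stat v) g t h x = Eval p q (stat v) (fun y _ => g y (v y)) t h x.
Proof. revert h x; induction t; intros h x; simpl; unfold stat.
  destruct (v x); ring.
  rewrite !(Ex_ext _ _ _ _ (fun y => IHt _ y)). reflexivity. Qed.

Lemma Eval_INR pi t h x : admissible pi -> Eval p q pi (fun y _ => INR y) t h x <= INR x + INR t.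
Proof. intros Hpi. revert h x; induction t; intros h x; simpl Eval.
  destruct (Hpi h x). simpl INR. nra.
  assert (forall nu h', Ex p q (Eval p q pi (fun y _ => INR y) t h') x nu <= INR x + INR (S t)).
  { intros nu h'. apply Rle_trans with (Ex p q (fun _ => INR x + INR (S t)) x nu).
    apply Ex_le. intros y Hy. apply Rle_trans with (INR y + INR t). apply IHt.
    rewrite S_INR. assert (INR y <= INR (S x)) by (apply le_INR; auto). rewrite S_INR in H. lra.
    rewrite Ex_const; lra. }
  destruct (Hpi h x). 
  assert (Ha1 := H true (h ++ (x, true) :: nil)%list); assert (Ha2 := H false (h ++ (x, false) :: nil)%list).
  rewrite S_INR in *. nra. Qed.


Lemma Rmin_le_compat a a' b b' : a <= a' -> b <= b' -> Rmin a b <= Rmin a' b'.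
Proof. intros; unfold Rmin; do 2 destruct Rle_dec; lra. Qed.

Lemma Ex_false_le f x : incr f -> Ex p q f x false <= f x.
Proof. intros Hf. destruct x. rewrite Ex0; lra.
  assert (H := Ex_top f (S x) Hf ltac:(lia)). replace (S x - 1)%nat with x in H by lia.
  assert (H1 := rr_range (S x)). assert (0 <= rr q (S x) ^ S x <= 1).
  { split. apply pow_le; lra. rewrite <- (pow1 (S x)). apply pow_incr; lra. }
  assert (f x <= f (S x)) by apply Hf. nra. Qed.

Lemma Bd_lim x r (F : nat -> nat -> R) (f : nat -> R) :
  (forall y, is_lim_seq (fun k => F k y) (f y)) -> is_lim_seq (fun k => Bd x r (F k)) (Bd x r f).
Proof. revert F f; induction x; intros F f H; simpl. apply H.
  apply (IHx (fun k y => r * F k (S y) + (1 - r) * F k y)). intros y.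
  apply is_lim_seq_plus'. apply (is_lim_seq_scal_l _ r (f (S y))). apply H.
  apply (is_lim_seq_scal_l _ (1 - r) (f y)). apply H. Qed.

Lemma Ex_lim x nu (F : nat -> nat -> R) (f : nat -> R) :
  (forall y, is_lim_seq (fun k => F k y) (f y)) -> is_lim_seq (fun k => Ex p q (F k) x nu) (Ex p q f x nu).
Proof. intros H. rewrite Ex_Bd. apply (is_lim_seq_ext (fun k => Bd x (rr q x) (Gf p (F k) nu))).
  intros; rewrite Ex_Bd; auto. apply Bd_lim. intros y; unfold Gf. destruct nu.
  apply is_lim_seq_plus'. apply (is_lim_seq_scal_l _ p (f (S y))). apply H.
  apply (is_lim_seq_scal_l _ (1 - p) (f y)). apply H. apply H. Qed.

Variables (C lam : R).
Hypothesis hC : 0 < C.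

Definition Tb (beta : R) (u : nat -> R) (x : nat) : R :=
  Rmin (cost C lam x true + beta * Ex p q u x true) (cost C lam x false + beta * Ex p q u x false).

Definition Lb (beta : R) : R := Rmin lam 0 / (1 - beta).

Fixpoint U (beta : R) (k : nat) : nat -> R :=
  match k with O => fun _ => Lb beta | S k' => Tb beta (U beta k') end.

Definition Bb (beta : R) (x : nat) : R := (C * INR x + Rabs lam) / (1 - beta).

Definition V (beta : R) (x : nat) : R := real (Lim_seq (fun k => U beta k x)).

Lemma cost_ge x nu : Rmin lam 0 + C * INR x <= cost C lam x nu.
Proof. unfold cost. assert (Rmin lam 0 <= lam) by apply Rmin_l.
  assert (Rmin lam 0 <= 0) by apply Rmin_r. destruct nu; lra. Qed.

Lemma Tb_mono beta u w x : 0 <= beta -> (forall y, u y <= w y) -> Tb beta u x <= Tb beta w x.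
Proof. intros Hb H. unfold Tb. apply Rmin_le_compat; apply Rplus_le_compat_l;
  apply Rmult_le_compat_l; auto; apply Ex_le; auto. Qed.

Lemma Tb_le beta u x nu : Tb beta u x <= cost C lam x nu + beta * Ex p q u x nu.
Proof. unfold Tb; destruct nu. apply Rmin_l. apply Rmin_r. Qed.

Section Disc.
Variable beta : R.
Hypothesis hb : 0 < beta < 1.

Lemma U_incr_k k x : U beta k x <= U beta (S k) x.
Proof. revert x; induction k; intros x.
  simpl. unfold Tb. rewrite !Ex_const. unfold Lb.
  assert (H1 := cost_ge x true); assert (H2 := cost_ge x false).
  assert (0 <= C * INR x) by (apply Rmult_le_pos; [lra|apply pos_INR]).
  assert (Rmin lam 0 / (1 - beta) = Rmin lam 0 + beta * (Rmin lam 0 / (1 - beta))) by (field; lra).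
  apply Rmin_glb; lra.
  simpl. apply Tb_mono; [lra|auto]. Qed.

Lemma Bb_incr : incr (Bb beta).
Proof. intros x. unfold Bb. rewrite S_INR. unfold Rdiv. apply Rmult_le_compat_r.
  left; apply Rinv_0_lt_compat; lra. nra. Qed.

Lemma U_ub k x : U beta k x <= Bb beta x.
Proof. revert x; induction k; intros x; simpl.
  unfold Lb, Bb. apply Rle_trans with 0. unfold Rdiv. apply Rmult_le_0_r. apply Rmin_r.
  left; apply Rinv_0_lt_compat; lra. apply Rmult_le_pos. 
  assert (0 <= INR x) by apply pos_INR. assert (0 <= Rabs lam) by apply Rabs_pos. nra.
  left; apply Rinv_0_lt_compat; lra.
  apply Rle_trans with (cost C lam x false + beta * Ex p q (Bb beta) x false).
  apply Rle_trans with (cost C lam x false + beta * Ex p q (U beta k) x false). apply Tb_le.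
  apply Rplus_le_compat_l, Rmult_le_compat_l; [lra|]. apply Ex_le; auto.
  assert (Ex p q (Bb beta) x false <= Bb beta x) by (apply Ex_false_le, Bb_incr).
  unfold cost. assert (lam <= Rabs lam) by apply Rle_abs.
  apply Rle_trans with (C * INR x + Rabs lam + beta * Bb beta x). nra.
  unfold Bb. right. field. lra. Qed.

Lemma U_incr_x k : incr (U beta k).
Proof. induction k; intros x; simpl. lra.
  unfold Tb. apply Rmin_le_compat; apply Rplus_le_compat; unfold cost;
  try (rewrite S_INR; nra); apply Rmult_le_compat_l; try lra; apply Ex_incr_x; auto. Qed.

Lemma V_lim x : is_lim_seq (fun k => U beta k x) (V beta x).
Proof. unfold V. apply Lim_seq_correct'. apply ex_finite_lim_seq_incr with (Bb beta x).
  intros; apply U_incr_k. intros; apply U_ub. Qed.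

Lemma U_le_V k x : U beta k x <= V beta x.
Proof. assert (H := V_lim x).
  change (Rbar_le (U beta k x) (V beta x)).
  apply is_lim_seq_le with (fun _ => U beta k x) (fun n => U beta (n + k) x).
  intros n. induction n. simpl; lra. eapply Rle_trans; [apply IHn| apply U_incr_k].
  apply is_lim_seq_const. apply (proj1 (is_lim_seq_incr_n (fun n => U beta n x) k _)). auto. Qed.

Lemma lim_le_const (u : nat -> R) (l M : R) : is_lim_seq u l -> (forall n, u n <= M) -> l <= M.
Proof. intros H H1. change (Rbar_le l M).
  apply is_lim_seq_le with u (fun _ => M); auto. apply is_lim_seq_const. Qed.

Lemma V_ub x : V beta x <= Bb beta x.
Proof. apply lim_le_const with (fun k => U beta k x). apply V_lim. intros; apply U_ub. Qed.

Lemma V_lb x : Lb beta <= V beta x.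
Proof. apply (U_le_V 0). Qed.

Lemma V_incr : incr (V beta).
Proof. intros x. apply lim_le_const with (fun k => U beta k x). apply V_lim.
  intros k. eapply Rle_trans. apply U_incr_x. apply U_le_V. Qed.

Lemma V_sub x nu : V beta x <= cost C lam x nu + beta * Ex p q (V beta) x nu.
Proof. apply lim_le_const with (fun k => U beta (S k) x). apply (proj1 (is_lim_seq_incr_1 (fun k => U beta k x) _)).
  apply V_lim. intros k; simpl. eapply Rle_trans. apply (Tb_le _ _ _ nu).
  apply Rplus_le_compat_l, Rmult_le_compat_l; [lra|]. apply Ex_le; intros; apply U_le_V. Qed.

Lemma V_super x : Tb beta (V beta) x <= V beta x.
Proof.
  assert (Hl : forall nu, is_lim_seq (fun k => cost C lam x nu + beta * Ex p q (U beta k) x nu)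
                                    (cost C lam x nu + beta * Ex p q (V beta) x nu)).
  { intros nu. apply is_lim_seq_plus'. apply is_lim_seq_const.
    apply (is_lim_seq_scal_l _ beta (Ex p q (V beta) x nu)). apply Ex_lim. intros; apply V_lim. }
  assert (Hm : is_lim_seq (fun k => Tb beta (U beta k) x) (Tb beta (V beta) x)).
  { unfold Tb. 
    apply (is_lim_seq_ext (fun k => ((cost C lam x true + beta * Ex p q (U beta k) x true) +
      (cost C lam x false + beta * Ex p q (U beta k) x false) -
      Rabs ((cost C lam x true + beta * Ex p q (U beta k) x true) -
      (cost C lam x false + beta * Ex p q (U beta k) x false))) / 2)).
    intros k. unfold Rmin. destruct Rle_dec. rewrite Rabs_left1 by lra. field.
    rewrite Rabs_right by lra. field.
    replace (Rmin (cost C lam x true + beta * Ex p q (V beta) x true)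
                  (cost C lam x false + beta * Ex p q (V beta) x false)) with
      (((cost C lam x true + beta * Ex p q (V beta) x true) +
      (cost C lam x false + beta * Ex p q (V beta) x false) -
      Rabs ((cost C lam x true + beta * Ex p q (V beta) x true) -
      (cost C lam x false + beta * Ex p q (V beta) x false))) / 2).
    2:{ unfold Rmin. destruct Rle_dec. rewrite Rabs_left1 by lra. field.
        rewrite Rabs_right by lra. field. }
    set (a := cost C lam x true + beta * Ex p q (V beta) x true).
    set (b := cost C lam x false + beta * Ex p q (V beta) x false).
    assert (Ha := Hl true). assert (Hb := Hl false). fold a in Ha. fold b in Hb.
    assert (Habs := is_lim_seq_abs _ _ (is_lim_seq_minus' _ _ _ _ Ha Hb)). simpl in Habs.
    assert (Hs := is_lim_seq_minus' _ _ _ _ (is_lim_seq_plus' _ _ _ _ Ha Hb) Habs).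
    assert (Hd := is_lim_seq_scal_r _ (/2) _ Hs). simpl in Hd. unfold Rdiv. exact Hd. }
  apply lim_le_const with (fun k => Tb beta (U beta k) x). auto.
  intros k. apply (U_le_V (S k)). Qed.

End Disc.

Fixpoint mB (x : nat) : R :=
  match x with O => 0 | S y => mB y + (C * INR (S y) + Rabs lam) / (1 - rr q (S y) ^ S y) end.

Lemma V0_lb beta : 0 < beta < 1 -> Rmin lam 0 <= (1 - beta) * V beta O.
Proof. intros hb. assert (H := V_lb beta hb O). unfold Lb in H.
  apply Rle_div_l in H; [|lra]. lra. Qed.

Lemma V0_ub beta : 0 < beta < 1 -> (1 - beta) * V beta O <= lam.
Proof. intros hb. assert (H := V_sub beta hb O false). rewrite Ex0 in H.
  unfold cost in H. simpl INR in H. lra. Qed.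

Lemma phi_ge beta x : 0 < beta < 1 -> 0 <= V beta x - V beta O.
Proof. intros hb. assert (V beta O <= V beta x) by (apply incr_le; [apply V_incr; auto|lia]). lra. Qed.

Lemma phi_le beta x : 0 < beta < 1 -> V beta x - V beta O <= mB x.
Proof. intros hb. induction x. simpl; lra.
  change (mB (S x)) with (mB x + (C * INR (S x) + Rabs lam) / (1 - rr q (S x) ^ S x)).
  set (y := S x).
  assert (Hs := V_sub beta hb y false).
  assert (Ht := Ex_top (V beta) y (V_incr beta hb) ltac:(unfold y; lia)).
  replace (y - 1)%nat with x in Ht by (unfold y; lia).
  assert (Hr := rr_lt1 y ltac:(unfold y; lia)).
  set (r := rr q y) in *.
  assert (Hrho : 0 < r ^ y < 1). { split. apply pow_lt; lra. 
     unfold y; simpl. assert (r ^ x <= 1) by (rewrite <- (pow1 x); apply pow_incr; lra).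
     assert (0 <= r ^ x) by (apply pow_le; lra). nra. }
  set (rho := r ^ y) in *.
  assert (H0 := V0_lb beta hb). assert (Hpx := phi_ge beta x hb). assert (Hpy := phi_ge beta y hb).
  unfold cost in Hs. cbv beta iota in Hs.
  assert (Hl1 : lam - Rmin lam 0 <= Rabs lam).
  { unfold Rmin; destruct Rle_dec. assert (0 <= Rabs lam) by apply Rabs_pos. lra.
    rewrite Rabs_right; lra. }
  set (py := V beta y - V beta O) in *. set (px := V beta x - V beta O) in *.
  assert (Hmain : py * (1 - rho) <= C * INR y + Rabs lam + (1 - rho) * mB x).
  { assert (py * (1 - beta * rho) <= C * INR y + Rabs lam + beta * (1 - rho) * px).
    { unfold py, px. assert (beta * Ex p q (V beta) y false <= beta * (rho * V beta y + (1 - rho) * V beta x))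
        by (apply Rmult_le_compat_l; lra). nra. }
    assert (beta * (1 - rho) * px <= (1 - rho) * mB x).
    { apply Rle_trans with ((1 - rho) * px). assert (0 <= (1 - beta) * ((1 - rho) * px)) by (apply Rmult_le_pos; [lra|apply Rmult_le_pos]; lra). nra. apply Rmult_le_compat_l; lra. }
    assert (0 <= py * rho * (1 - beta)) by (apply Rmult_le_pos; [apply Rmult_le_pos|]; lra). lra. }
  assert (py <= (C * INR y + Rabs lam + (1 - rho) * mB x) / (1 - rho)) by (apply Rle_div_r; lra).
  assert ((C * INR y + Rabs lam + (1 - rho) * mB x) / (1 - rho) = mB x + (C * INR y + Rabs lam) / (1 - rho))
    by (field; lra). lra.
Qed.

Definition bn (n : nat) : R := 1 - / INR (n + 2).

Lemma bn_range n : 0 < bn n < 1 /\ 1 / 2 <= bn n.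
Proof. unfold bn. assert (2 <= INR (n + 2)) by (rewrite plus_INR; simpl; assert (0 <= INR n) by apply pos_INR; lra).
  assert (0 < / INR (n + 2)) by (apply Rinv_0_lt_compat; lra).
  assert (/ INR (n + 2) <= / 2) by (apply Rinv_le_contravar; lra). lra. Qed.

Lemma bn_hb n : 0 < bn n < 1.
Proof. apply bn_range. Qed.

Definition gseq (n : nat) : R := (1 - bn n) * V (bn n) O.
Definition phis (n : nat) (x : nat) : R := V (bn n) x - V (bn n) O.

Definition Gv : R := real (LimSup_seq gseq).
Definition hv (x : nat) : R := real (LimInf_seq (fun n => phis n x)).

Lemma limsup_props (u : nat -> R) lo hi : (forall n, lo <= u n <= hi) ->
  forall eps, 0 < eps -> (forall N, exists n, (N <= n)%nat /\ real (LimSup_seq u) - eps < u n) /\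
    (exists N, forall n, (N <= n)%nat -> u n < real (LimSup_seq u) + eps).
Proof. intros Hb eps He. destruct (ex_LimSup_seq u) as [l Hl].
  rewrite (is_LimSup_seq_unique _ _ Hl). destruct l as [l| |]; simpl in Hl.
  apply (Hl (mkposreal eps He)).
  exfalso. destruct (Hl (hi + 1) O) as [n [_ Hn]]. specialize (Hb n). lra.
  exfalso. destruct (Hl lo) as [N HN]. specialize (HN N (le_n N)). specialize (Hb N). lra. Qed.

Lemma liminf_props (u : nat -> R) lo hi : (forall n, lo <= u n <= hi) ->
  forall eps, 0 < eps -> (forall N, exists n, (N <= n)%nat /\ u n < real (LimInf_seq u) + eps) /\
    (exists N, forall n, (N <= n)%nat -> real (LimInf_seq u) - eps < u n).
Proof. intros Hb eps He. destruct (ex_LimInf_seq u) as [l Hl].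
  rewrite (is_LimInf_seq_unique _ _ Hl). destruct l as [l| |]; simpl in Hl.
  apply (Hl (mkposreal eps He)).
  exfalso. destruct (Hl (hi + 1)) as [N HN]. specialize (HN N (le_n N)). specialize (Hb N). lra.
  exfalso. destruct (Hl lo O) as [n [_ Hn]]. specialize (Hb n). lra. Qed.

Lemma liminf_ge (u : nat -> R) lo hi : (forall n, lo <= u n <= hi) -> lo <= real (LimInf_seq u).
Proof. intros Hb. apply Rle_plus_epsilon. intros eps He.
  destruct (liminf_props u lo hi Hb eps He) as [H1 _]. destruct (H1 O) as [n [_ Hn]].
  specialize (Hb n). lra. Qed.

Lemma gseq_b n : Rmin lam 0 <= gseq n <= lam.
Proof. unfold gseq. split. apply V0_lb, bn_hb. apply V0_ub, bn_hb. Qed.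

Lemma phis_b n x : 0 <= phis n x <= mB x.
Proof. unfold phis. split. apply phi_ge, bn_hb. apply phi_le, bn_hb. Qed.

Lemma hv_ge x : 0 <= hv x.
Proof. apply (liminf_ge _ 0 (mB x)). intros; apply phis_b. Qed.

Lemma Rmin_plus a b c : Rmin (a + c) (b + c) = Rmin a b + c.
Proof. unfold Rmin; do 2 destruct Rle_dec; lra. Qed.

Lemma step_n n x : Rmin (cost C lam x true + bn n * Ex p q (phis n) x true)
   (cost C lam x false + bn n * Ex p q (phis n) x false) <= gseq n + phis n x.
Proof. assert (H := V_super (bn n) (bn_hb n) x). unfold Tb in H.
  assert (HE : forall nu, Ex p q (V (bn n)) x nu = Ex p q (phis n) x nu + V (bn n) O).
  { intros nu. rewrite <- (Ex_const (V (bn n) O) x nu). rewrite <- (Rmult_1_l (Ex p q (phis n) x nu)).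
    rewrite <- Ex_lin. apply Ex_ext. intros; unfold phis; ring. }
  rewrite !HE in H.
  replace (cost C lam x true + bn n * (Ex p q (phis n) x true + V (bn n) O)) with
    ((cost C lam x true + bn n * Ex p q (phis n) x true) + bn n * V (bn n) O) in H by ring.
  replace (cost C lam x false + bn n * (Ex p q (phis n) x false + V (bn n) O)) with
    ((cost C lam x false + bn n * Ex p q (phis n) x false) + bn n * V (bn n) O) in H by ring.
  rewrite Rmin_plus in H. unfold gseq. replace (phis n x) with (V (bn n) x - V (bn n) O) by reflexivity. lra. Qed.

Lemma phis_event eps K : 0 < eps -> exists N, forall n, (N <= n)%nat -> forall y, (y <= K)%nat -> hv y - eps < phis n y.
Proof. intros He. induction K.
  destruct (liminf_props (fun n => phis n O) 0 (mB O) (fun n => phis_b n O) eps He) as [_ [N HN]].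
  exists N. intros n Hn y Hy. replace y with O by lia. apply HN; auto.
  destruct IHK as [N1 HN1].
  destruct (liminf_props (fun n => phis n (S K)) 0 (mB (S K)) (fun n => phis_b n (S K)) eps He) as [_ [N2 HN2]].
  exists (max N1 N2). intros n Hn y Hy. destruct (Nat.eq_dec y (S K)). subst. apply HN2; lia.
  apply HN1; lia. Qed.

Lemma bn_small K eps : 0 < eps -> exists N, forall n, (N <= n)%nat -> (1 - bn n) * K <= eps.
Proof. intros He. destruct (INR_archimed eps (Rabs K) He) as [N HN]. exists N. intros n Hn.
  unfold bn. replace (1 - (1 - / INR (n + 2))) with (/ INR (n + 2)) by ring.
  assert (INR N <= INR (n + 2)) by (apply le_INR; lia).
  assert (0 < INR (n + 2)) by (apply lt_0_INR; lia).
  apply Rle_trans with (/ INR (n + 2) * Rabs K).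
  apply Rmult_le_compat_l; [left; apply Rinv_0_lt_compat; lra| apply Rle_abs].
  rewrite Rmult_comm. change (Rabs K / INR (n + 2) <= eps). apply Rle_div_l; [lra|]. nra. Qed.

Lemma acoi x : Rmin (cost C lam x true + Ex p q hv x true) (cost C lam x false + Ex p q hv x false)
   <= Gv + hv x.
Proof. apply Rle_plus_epsilon. intros e He.
  set (eps := e / 4). assert (Heps : 0 < eps) by (unfold eps; lra).
  destruct (limsup_props gseq (Rmin lam 0) lam gseq_b eps Heps) as [_ [N1 HN1]].
  destruct (phis_event eps (S x) Heps) as [N2 HN2].
  destruct (bn_small (Rabs (Ex p q hv x true) + Rabs (Ex p q hv x false)) eps Heps) as [N3 HN3].
  destruct (liminf_props (fun n => phis n x) 0 (mB x) (fun n => phis_b n x) eps Heps) as [Hf _].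
  destruct (Hf (max N1 (max N2 N3))) as [n [Hn Hnx]]. fold (hv x) in Hnx.
  assert (H := step_n n x).
  assert (H1 := HN1 n ltac:(lia)). fold Gv in H1.
  assert (H3 := HN3 n ltac:(lia)).
  assert (Hb := bn_range n).
  assert (Hnu : forall nu, cost C lam x nu + Ex p q hv x nu - 2 * eps <= cost C lam x nu + bn n * Ex p q (phis n) x nu).
  { intros nu. 
    assert (Ex p q (fun y => 1 * hv y + - eps) x nu <= Ex p q (phis n) x nu).
    { apply Ex_le. intros y Hy. assert (HH := HN2 n ltac:(lia) y Hy). lra. }
    rewrite Ex_lin, Ex_const in H0.
    assert (Habs : (1 - bn n) * Ex p q hv x nu <= eps).
    { eapply Rle_trans; [|apply H3]. apply Rmult_le_compat_l. lra.
      assert (HA1 := Rle_abs (Ex p q hv x true)); assert (HA2 := Rle_abs (Ex p q hv x false)).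
      assert (HA3 := Rabs_pos (Ex p q hv x true)); assert (HA4 := Rabs_pos (Ex p q hv x false)).
      destruct nu; lra. }
    assert (bn n * (1 * Ex p q hv x nu + - eps) <= bn n * Ex p q (phis n) x nu) by (apply Rmult_le_compat_l; lra).
    nra. }
  assert (Rmin (cost C lam x true + Ex p q hv x true) (cost C lam x false + Ex p q hv x false) - 2 * eps <=
    Rmin (cost C lam x true + bn n * Ex p q (phis n) x true) (cost C lam x false + bn n * Ex p q (phis n) x false)).
  { replace (Rmin (cost C lam x true + Ex p q hv x true) (cost C lam x false + Ex p q hv x false) - 2 * eps) with
      (Rmin (cost C lam x true + Ex p q hv x true - 2 * eps) (cost C lam x false + Ex p q hv x false - 2 * eps)).
    apply Rmin_le_compat; apply Hnu. unfold Rminus. rewrite Rmin_plus. auto. }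
  unfold eps in *. lra. Qed.

Definition vopt (x : nat) : bool :=
  if Rle_dec (cost C lam x true + Ex p q hv x true) (cost C lam x false + Ex p q hv x false) then true else false.

Lemma vopt_prop x : cost C lam x (vopt x) + Ex p q hv x (vopt x) <= Gv + hv x.
Proof. assert (H := acoi x). unfold vopt. unfold Rmin in H. destruct Rle_dec; lra. Qed.

Lemma Eval_ext pi g1 g2 t h x : (forall y nu, g1 y nu = g2 y nu) -> Eval p q pi g1 t h x = Eval p q pi g2 t h x.
Proof. intros H. revert h x; induction t; intros h x; simpl. rewrite !H; auto.
  rewrite !(Ex_ext _ _ _ _ (fun y => IHt _ y)). auto. Qed.

Lemma Eval_add pi g1 g2 t h x : Eval p q pi (fun y nu => g1 y nu + g2 y nu) t h x = Eval p q pi g1 t h x + Eval p q pi g2 t h x.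
Proof. rewrite <- (Rmult_1_l (Eval p q pi g1 t h x)). rewrite <- Eval_lin. apply Eval_ext; intros; ring. Qed.

Lemma Eval_scal pi a g t h x : Eval p q pi (fun y nu => a * g y nu) t h x = a * Eval p q pi g t h x.
Proof. rewrite <- (Rplus_0_r (a * Eval p q pi g t h x)). rewrite <- (Eval_const pi 0 t h x).
  rewrite <- Eval_lin. apply Eval_ext; intros; ring. Qed.

Lemma Eval_top0 pi g h x : Eval p q pi (fun y _ => g y) 0 h x = g x.
Proof. simpl. ring. Qed.

Lemma upper x0 T : sumR T (fun t => Eval p q (stat vopt) (cost C lam) t nil x0)
   + Eval p q (stat vopt) (fun y _ => hv y) T nil x0 <= INR T * Gv + hv x0.
Proof. induction T. rewrite Eval_top0. simpl. lra.
  change (sumR (S T) (fun t => Eval p q (stat vopt) (cost C lam) t nil x0)) with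
   (sumR T (fun t => Eval p q (stat vopt) (cost C lam) t nil x0) + Eval p q (stat vopt) (cost C lam) T nil x0).
  rewrite <- Eval_shift. 
  assert (Eval p q (stat vopt) (cost C lam) T nil x0 + Eval p q (stat vopt) (fun y nu => Ex p q hv y nu) T nil x0
          <= Gv + Eval p q (stat vopt) (fun y _ => hv y) T nil x0).
  { rewrite <- Eval_add. rewrite Eval_stat.
    rewrite <- (Eval_const (stat vopt) Gv T nil x0) at 1. rewrite <- Eval_add.
    apply Eval_le. apply stat_adm. intros y _. assert (H := vopt_prop y). lra. }
  rewrite S_INR. lra. Qed.

Lemma Jv_bound x0 T : (1 <= T)%nat -> J p q C lam (stat vopt) x0 T <= Gv + hv x0 / INR T.
Proof. intros HT. unfold J, avg. assert (H := upper x0 T).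
  assert (0 <= Eval p q (stat vopt) (fun y _ => hv y) T nil x0).
  { rewrite <- (Eval_const (stat vopt) 0 T nil x0). apply Eval_le. apply stat_adm. intros; apply hv_ge. }
  assert (0 < INR T) by (apply lt_0_INR; lia).
  apply Rle_trans with (/ INR T * (INR T * Gv + hv x0)).
  apply Rmult_le_compat_l. left; apply Rinv_0_lt_compat; lra. lra.
  right. field. lra. Qed.

Lemma disc_lower pi x0 beta : admissible pi -> 0 < beta < 1 -> forall n,
  V beta x0 <= sumR n (fun t => beta ^ t * Eval p q pi (cost C lam) t nil x0)
     + beta ^ n * Eval p q pi (fun y _ => V beta y) n nil x0.
Proof. intros Hpi hb n. induction n. rewrite Eval_top0. simpl. lra.
  eapply Rle_trans. apply IHn.
  change (sumR (S n) (fun t => beta ^ t * Eval p q pi (cost C lam) t nil x0)) with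
   (sumR n (fun t => beta ^ t * Eval p q pi (cost C lam) t nil x0) + beta ^ n * Eval p q pi (cost C lam) n nil x0).
  rewrite <- Eval_shift.
  assert (Eval p q pi (fun y _ => V beta y) n nil x0 <=
     Eval p q pi (cost C lam) n nil x0 + beta * Eval p q pi (fun y nu => Ex p q (V beta) y nu) n nil x0).
  { rewrite <- Eval_scal. rewrite <- Eval_add. apply Eval_le; auto. intros; apply V_sub; auto. }
  assert (0 <= beta ^ n) by (apply pow_le; lra).
  assert (beta ^ n * Eval p q pi (fun y _ => V beta y) n nil x0 <=
     beta ^ n * (Eval p q pi (cost C lam) n nil x0 + beta * Eval p q pi (fun y nu => Ex p q (V beta) y nu) n nil x0))
     by (apply Rmult_le_compat_l; auto).
  simpl pow. lra. Qed.

Lemma EvalV_ub pi x0 beta n : admissible pi -> 0 < beta < 1 ->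
  (1 - beta) * Eval p q pi (fun y _ => V beta y) n nil x0 <= C * (INR x0 + INR n) + Rabs lam.
Proof. intros Hpi hb.
  assert (Eval p q pi (fun y _ => V beta y) n nil x0 <=
     Eval p q pi (fun y _ => (C / (1 - beta)) * INR y + Rabs lam / (1 - beta)) n nil x0).
  { apply Eval_le; auto. intros y _. eapply Rle_trans. apply V_ub; auto. unfold Bb. right; field; lra. }
  rewrite Eval_lin, Eval_const in H. assert (H1 := Eval_INR pi n nil x0 Hpi).
  assert (0 <= C / (1 - beta)) by (apply Rdiv_le_0_compat; lra).
  assert (C / (1 - beta) * Eval p q pi (fun y _ => INR y) n nil x0 <= C / (1 - beta) * (INR x0 + INR n))
    by (apply Rmult_le_compat_l; auto).
  assert ((1 - beta) * (C / (1 - beta) * (INR x0 + INR n) + Rabs lam / (1 - beta)) = C * (INR x0 + INR n) + Rabs lam)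
    by (field; lra).
  assert ((1 - beta) * Eval p q pi (fun y _ => V beta y) n nil x0 <=
    (1 - beta) * (C / (1 - beta) * (INR x0 + INR n) + Rabs lam / (1 - beta))) by (apply Rmult_le_compat_l; lra).
  lra. Qed.

Lemma abel (a : nat -> R) beta n : beta * sumR n (fun t => beta ^ t * a t) =
  beta ^ n * sumR n a + (1 - beta) * sumR n (fun t => beta ^ t * sumR t a).
Proof. induction n. simpl; ring. simpl sumR. simpl pow.
  replace (beta * (sumR n (fun t => beta ^ t * a t) + beta ^ n * a n)) with
    (beta * sumR n (fun t => beta ^ t * a t) + beta * beta ^ n * a n) by ring.
  rewrite IHn. ring. Qed.

Lemma geom_sum beta n : (1 - beta) * sumR n (fun t => beta ^ t) = 1 - beta ^ n.
Proof. induction n. simpl; ring. simpl sumR. simpl pow.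
  rewrite Rmult_plus_distr_l, IHn. ring. Qed.

Lemma sumR_Sp (a : nat -> R) c' t : sumR t (fun s => a s - c') = sumR t a - c' * INR t.
Proof. induction t. simpl; ring. simpl sumR. rewrite IHt, S_INR. ring. Qed.

Lemma sum_boundK (f : nat -> R) beta N n : 0 <= beta <= 1 -> (forall t, (N <= t)%nat -> f t <= 0) ->
  sumR n (fun t => beta ^ t * f t) <= sumR N (fun t => Rmax (f t) 0).
Proof. intros hb Hf.
  assert (Hpos : forall m, 0 <= sumR m (fun t => Rmax (f t) 0)).
  { induction m; simpl. lra. assert (0 <= Rmax (f m) 0) by apply Rmax_r. lra. }
  assert (Hmono : forall m1 m2, (m1 <= m2)%nat -> sumR m1 (fun t => Rmax (f t) 0) <= sumR m2 (fun t => Rmax (f t) 0)).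
  { intros m1 m2 Hm. induction Hm. lra. simpl. assert (0 <= Rmax (f m) 0) by apply Rmax_r. lra. }
  assert (Hterm : forall t, beta ^ t * f t <= Rmax (f t) 0).
  { intros t. assert (0 <= beta ^ t <= 1) by (split; [apply pow_le; lra| rewrite <- (pow1 t); apply pow_incr; lra]).
    assert (f t <= Rmax (f t) 0) by apply Rmax_l. assert (0 <= Rmax (f t) 0) by apply Rmax_r.
    unfold Rmax in *; destruct Rle_dec; nra. }
  induction n. simpl. apply Hpos.
  simpl. destruct (Compare_dec.le_lt_dec N n).
  assert (beta ^ n * f n <= 0). { assert (0 <= beta ^ n) by (apply pow_le; lra). assert (f n <= 0) by auto. nra. }
  lra.
  eapply Rle_trans with (sumR (S n) (fun t => Rmax (f t) 0)). simpl.
  assert (sumR n (fun t => beta ^ t * f t) <= sumR n (fun t => Rmax (f t) 0)) by (apply sumR_le; intros; apply Hterm).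
  specialize (Hterm n). lra. apply Hmono. lia. Qed.

Lemma pow_n_small beta A B : 0 < beta < 1 -> 0 <= A -> 0 <= B -> forall eps, 0 < eps -> forall N,
  exists n, (N <= n)%nat /\ beta ^ n * (A + B * INR n) <= eps.
Proof. intros hb HA HB eps He N.
  set (g := sqrt beta). assert (Hg : 0 < g < 1).
  { unfold g. split. apply sqrt_lt_R0; lra. rewrite <- sqrt_1. apply sqrt_lt_1; lra. }
  assert (Hgg : g * g = beta) by (apply sqrt_sqrt; lra).
  assert (Hpow : forall n, beta ^ n = g ^ n * g ^ n) by (intros; rewrite <- Rpow_mult_distr, Hgg; auto).
  assert (Hng : forall n, INR n * g ^ n <= / (1 - g)).
  { intros n. assert (INR n * g ^ n <= sumR n (fun t => g ^ t)).
    { assert (Hs : forall m, (m <= n)%nat -> INR m * g ^ n <= sumR m (fun t => g ^ t)).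
      { induction m; intros Hm. simpl; lra. simpl sumR. rewrite S_INR.
        assert (g ^ n <= g ^ m).
        { replace n with (m + (n - m))%nat by lia. rewrite pow_add.
          assert (0 <= g ^ m) by (apply pow_le; lra).
          assert (g ^ (n - m) <= 1) by (rewrite <- (pow1 (n - m)); apply pow_incr; lra). nra. }
        assert (IH := IHm ltac:(lia)). lra. }
      apply Hs; lia. }
    assert ((1 - g) * sumR n (fun t => g ^ t) = 1 - g ^ n) by apply geom_sum.
    assert (0 <= g ^ n) by (apply pow_le; lra).
    apply Rle_trans with (sumR n (fun t => g ^ t)); auto.
    apply (Rmult_le_reg_l (1 - g)); [lra|]. rewrite Rinv_r by lra. lra. }
  set (K := A + B / (1 - g)).
  assert (HK : 0 <= K) by (unfold K; assert (0 <= B / (1 - g)) by (apply Rdiv_le_0_compat; lra); lra).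
  destruct (pow_lt_1_zero g ltac:(rewrite Rabs_right; lra) (eps / (K + 1)) ltac:(apply Rdiv_lt_0_compat; lra)) as [M HM].
  exists (max N M). split. lia. set (n := max N M).
  specialize (HM n ltac:(unfold n; lia)). rewrite Rabs_right in HM by (apply Rle_ge, pow_le; lra).
  rewrite Hpow. assert (Hgn : 0 <= g ^ n) by (apply pow_le; lra).
  assert (g ^ n <= 1) by (rewrite <- (pow1 n); apply pow_incr; lra).
  assert (A + B * INR n * g ^ n <= K).
  { unfold K. assert (B * (INR n * g ^ n) <= B * / (1 - g)) by (apply Rmult_le_compat_l; auto). unfold Rdiv. nra. }
  assert (g ^ n * g ^ n * (A + B * INR n) = g ^ n * (A * g ^ n + B * INR n * g ^ n)) by ring.
  assert (A * g ^ n <= A) by nra.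
  assert (g ^ n * (A * g ^ n + B * INR n * g ^ n) <= g ^ n * K) by (apply Rmult_le_compat_l; lra).
  assert (g ^ n * K <= eps / (K + 1) * K) by (apply Rmult_le_compat_r; lra).
  assert (eps / (K + 1) * K <= eps).
  { unfold Rdiv. rewrite Rmult_assoc. rewrite <- (Rmult_1_r eps) at 2. apply Rmult_le_compat_l. lra.
    apply Rmult_le_reg_l with (K + 1). lra. field_simplify; lra. }
  lra. Qed.

Lemma lower pi x0 c' N : admissible pi -> (forall T, (N <= T)%nat -> J p q C lam pi x0 T <= c') -> Gv <= c'.
Proof. intros Hpi HJ.
  set (a := fun t => Eval p q pi (cost C lam) t nil x0).
  set (N1 := max N 1).
  assert (HS : forall T, (N1 <= T)%nat -> sumR T a <= c' * INR T).
  { intros T HT. assert (H := HJ T ltac:(unfold N1 in HT; lia)). unfold J, avg in H. fold a in H.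
    assert (0 < INR T) by (apply lt_0_INR; unfold N1 in HT; lia).
    apply Rmult_le_compat_l with (r := INR T) in H; [|lra].
    rewrite <- Rmult_assoc, Rinv_r in H by lra. lra. }
  set (f := fun t => sumR t a - c' * INR t).
  assert (Hf : forall t, (N1 <= t)%nat -> f t <= 0) by (intros t Ht; unfold f; specialize (HS t Ht); lra).
  set (K := sumR N1 (fun t => Rmax (f t) 0)).
  assert (HK : 0 <= K).
  { unfold K. clear. induction N1; simpl. lra. assert (0 <= Rmax (f N1) 0) by apply Rmax_r. lra. }
  assert (Hg : forall n, gseq n <= c' + 2 * K * (1 - bn n)).
  { intros n. destruct (bn_range n) as [hb hb2]. set (beta := bn n) in *.
    assert (Hv0 : V beta O <= V beta x0) by (apply incr_le; [apply V_incr; auto|lia]).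
    unfold gseq. fold beta.
    apply Rle_trans with ((1 - beta) * V beta x0). apply Rmult_le_compat_l; lra.
    apply Rle_plus_epsilon. intros eps He.
    destruct (pow_n_small beta (Rabs c' + C * INR x0 + Rabs lam) C hb
      ltac:(assert (0 <= INR x0) by apply pos_INR; assert (0 <= Rabs c') by apply Rabs_pos;
            assert (0 <= Rabs lam) by apply Rabs_pos; nra) ltac:(lra) eps He N1) as [m [Hm Hsm]].
    assert (Hd := disc_lower pi x0 beta Hpi hb m). fold a in Hd.
    assert (He2 := EvalV_ub pi x0 beta m Hpi hb).
    assert (Hbm : 0 <= beta ^ m) by (apply pow_le; lra).
    assert (Hbm1 : beta ^ m <= 1) by (rewrite <- (pow1 m); apply pow_incr; lra).
    set (E := Eval p q pi (fun y _ => V beta y) m nil x0) in *.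
    assert (HE : (1 - beta) * (beta ^ m * E) <= beta ^ m * (C * (INR x0 + INR m) + Rabs lam)).
    { replace ((1 - beta) * (beta ^ m * E)) with (beta ^ m * ((1 - beta) * E)) by ring.
      apply Rmult_le_compat_l; auto. }
    set (X := sumR m (fun t => beta ^ t * (a t - c'))).
    assert (Hab := abel (fun t => a t - c') beta m). fold X in Hab.
    rewrite (sumR_ext _ (fun t => beta ^ t * sumR t (fun s => a s - c')) (fun t => beta ^ t * f t)) in Hab
      by (intros; unfold f; rewrite sumR_Sp; auto).
    rewrite sumR_Sp in Hab. fold (f m) in Hab.
    assert (Hfm := Hf m Hm).
    assert (HbK := sum_boundK f beta N1 m ltac:(lra) Hf). fold K in HbK.
    assert (HX : beta * X <= (1 - beta) * K).
    { unfold X. rewrite Hab. assert (beta ^ m * f m <= 0) by nra.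
      assert ((1 - beta) * sumR m (fun t => beta ^ t * f t) <= (1 - beta) * K) by (apply Rmult_le_compat_l; lra). lra. }
    assert (HX2 : X <= 2 * (1 - beta) * K).
    { destruct (Rle_dec 0 X). nra. assert (0 <= (1 - beta) * K) by (apply Rmult_le_pos; lra). nra. }
    assert (Hsplit : sumR m (fun t => beta ^ t * a t) = X + c' * sumR m (fun t => beta ^ t)).
    { unfold X. rewrite Rplus_comm. rewrite <- sumR_lin.
      apply sumR_ext. intros; ring. }
    assert (Hgs := geom_sum beta m).
    assert (Hd' : V beta x0 <= sumR m (fun t => beta ^ t * a t) + beta ^ m * E) by exact Hd.
    assert (Hfin : (1 - beta) * V beta x0 <= (1 - beta) * X + c' * (1 - beta ^ m) + beta ^ m * (C * (INR x0 + INR m) + Rabs lam)).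
    { apply Rle_trans with ((1 - beta) * (sumR m (fun t => beta ^ t * a t) + beta ^ m * E)).
      apply Rmult_le_compat_l; lra. rewrite Rmult_plus_distr_l. rewrite Hsplit.
      replace ((1 - beta) * (X + c' * sumR m (fun t => beta ^ t))) with ((1 - beta) * X + c' * ((1 - beta) * sumR m (fun t => beta ^ t))) by ring.
      rewrite Hgs. lra. }
    assert ((1 - beta) * X <= 2 * K * (1 - beta)).
    { apply Rle_trans with ((1 - beta) * (2 * (1 - beta) * K)). apply Rmult_le_compat_l; lra.
      assert (0 <= beta * (1 - beta) * K) by (apply Rmult_le_pos; [apply Rmult_le_pos|]; lra). nra. }
    assert (- c' * beta ^ m <= Rabs c' * beta ^ m).
    { apply Rmult_le_compat_r; auto. rewrite <- Rabs_Ropp. apply Rle_abs. }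
    assert (beta ^ m * (C * (INR x0 + INR m) + Rabs lam) + Rabs c' * beta ^ m =
      beta ^ m * (Rabs c' + C * INR x0 + Rabs lam + C * INR m)) by ring.
    lra. }
  apply Rle_plus_epsilon. intros e He.
  destruct (bn_small (2 * K) (e / 2) ltac:(lra)) as [N3 HN3].
  destruct (limsup_props gseq (Rmin lam 0) lam gseq_b (e / 2) ltac:(lra)) as [Hfr _].
  destruct (Hfr N3) as [n [Hn Hgn]]. fold Gv in Hgn.
  specialize (HN3 n Hn). specialize (Hg n). lra. Qed.

Lemma archi_T (A eps : R) : 0 <= A -> 0 < eps -> exists T0, (1 <= T0)%nat /\ forall T, (T0 <= T)%nat -> A / INR T <= eps.
Proof. intros HA He. destruct (INR_archimed eps A He) as [n Hn]. exists (max n 1). split. lia.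
  intros T HT. assert (INR n <= INR T) by (apply le_INR; lia). assert (0 < INR T) by (apply lt_0_INR; lia).
  apply Rle_div_l; [lra|]. nra. Qed.

Lemma opt_part x0 pi : admissible pi -> limsup_le (J p q C lam (stat vopt) x0) (J p q C lam pi x0).
Proof. intros Hpi c [c' [Hc' [N HN]]]. assert (HG := lower pi x0 c' N Hpi HN).
  exists ((Gv + c) / 2). split. lra.
  destruct (archi_T (hv x0) ((c - Gv) / 2) (hv_ge x0) ltac:(lra)) as [T0 [HT0 HT]].
  exists T0. intros T HT'. eapply Rle_trans. apply Jv_bound. lia. specialize (HT T HT'). lra. Qed.

Lemma sumR_const n c : sumR n (fun _ => c) = INR n * c.
Proof. induction n. simpl; ring. simpl sumR. rewrite IHn, S_INR. ring. Qed.

Lemma stable_part : stable p q vopt.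
Proof. intros x0. set (m := Rmin lam 0). exists ((Gv - m + 2) / C).
  exists ((Gv - m + 1) / C). split. unfold Rdiv. apply Rmult_lt_compat_r. apply Rinv_0_lt_compat; lra. lra.
  destruct (archi_T (hv x0) 1 (hv_ge x0) ltac:(lra)) as [T0 [HT0 HT]].
  exists T0. intros T HT'. specialize (HT T HT').
  assert (HU := upper x0 T).
  assert (0 <= Eval p q (stat vopt) (fun y _ => hv y) T nil x0).
  { rewrite <- (Eval_const (stat vopt) 0 T nil x0). apply Eval_le. apply stat_adm. intros; apply hv_ge. }
  assert (Hc : forall t, C * Eval p q (stat vopt) (fun y _ => INR y) t nil x0 + m <= Eval p q (stat vopt) (cost C lam) t nil x0).
  { intros t. rewrite <- (Eval_const (stat vopt) m t nil x0). rewrite <- Eval_lin. apply Eval_le. apply stat_adm. intros y nu. assert (HH := cost_ge y nu). unfold m. lra. }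
  assert (Hs : C * sumR T (fun t => Eval p q (stat vopt) (fun y _ => INR y) t nil x0) + INR T * m <=
     sumR T (fun t => Eval p q (stat vopt) (cost C lam) t nil x0)).
  { rewrite <- sumR_const, <- sumR_lin. apply sumR_le. intros; apply Hc. }
  assert (0 < INR T) by (apply lt_0_INR; lia).
  unfold avg. set (S := sumR T (fun t => Eval p q (stat vopt) (fun y _ => INR y) t nil x0)) in *.
  assert (S <= (INR T * (Gv - m) + hv x0) / C) by (apply Rle_div_r; lra).
  apply Rle_trans with (/ INR T * ((INR T * (Gv - m) + hv x0) / C)).
  apply Rmult_le_compat_l; [left; apply Rinv_0_lt_compat; lra| auto].
  replace (/ INR T * ((INR T * (Gv - m) + hv x0) / C)) with ((Gv - m + hv x0 / INR T) / C) by (field; lra).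
  unfold Rdiv. apply Rmult_le_compat_r. left; apply Rinv_0_lt_compat; lra. unfold Rdiv in HT. lra. Qed.

End ExProps.

Theorem lemma3 (p q C lam : R) (hp0 : 0 < p) (hp1 : p < 1)
  (hq : 2 * p < q) (hq1 : q < 1) (hC : 0 < C) :
  exists v : nat -> bool,
    (forall (x0 : nat) (pi : policy), admissible pi ->
       limsup_le (J p q C lam (stat v) x0) (J p q C lam pi x0)) /\
    stable p q v /\
    (forall a : R, 0 < a -> p * (exp a - 1) < q / 2 * (1 - exp (- a)) ->
       exists b : R, 0 < b /\
         forall x : nat, x <> 0%nat ->
           Ex p q (W a) x (v x) - W a x <= - b * W a x).
Proof. assert (hq0 : 0 < q) by lra.
  exists (vopt p q C lam). split; [|split].
  - intros x0 pi Hpi. apply (opt_part p q hp0 hp1 hq0 hq1 C lam hC x0 pi Hpi).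
  - apply (stable_part p q hp0 hp1 hq0 hq1 C lam hC).
  - intros a Ha Hc. destruct (lyap p q hp0 hp1 hq0 hq1 a Ha Hc) as [b [Hb H]].
    exists b. split; [exact Hb|]. intros x Hx. apply H; auto.
Qed.
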